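(* Let $X$ be a real Banach space, let $K\subseteq X$ be closed and nonempty, let $x\in X\setminus K$, and let $\overline{x}\in K$ be a nearest point to $x$ in $K$ (i.e. $\|x-\overline{x}\|=d_K(x)$). If the norm of $X$ is Gateaux differentiable at $x-\overline{x}$ and $d_{K}^{-}(x;x-\overline{x})=d_{K}(x)$, then $d_{K}$ is Gateaux differentiable at $x$.
   Context: For a nonempty subset $K$ of a real Banach space $(X,\|\cdot\|)$, $d_{K}(x)=\inf\{\|x-v\|: v\in K\}$. For $x,y\in X$, $d_{K}^{-}(x;y)=\liminf_{t\to 0^{+}}\frac{d_{K}(x+ty)-d_{K}(x)}{t}$. A function $f:X\to\mathbb{R}$ is Gateaux differentiable at $x$ if there is $A\in X^{*}$ with $A(y)=\lim_{t\to 0}\frac{f(x+ty)-f(x)}{t}$ for all $y\in X$; the norm is Gateaux differentiable at a nonzero $u$ if $v\mapsto\|v\|$ is Gateaux differentiable at $u$. *)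

(* Defs.v *)
From HB Require Import structures.
From mathcomp Require Import all_boot all_order all_algebra.
From mathcomp Require Import all_classical all_reals all_analysis.
Set Implicit Arguments. Unset Strict Implicit. Unset Printing Implicit Defensive.
Import Order.TTheory GRing.Theory Num.Theory.
Import numFieldNormedType.Exports.
Local Open Scope classical_set_scope.
Local Open Scope ring_scope.

Definition distK {R : realType} {X : normedModType R} (K : set X) (x : X) : R :=
  inf [set `|x - v| | v in K].

Definition distK_lower_dir {R : realType} {X : normedModType R}
    (K : set X) (x y : X) : \bar R :=
  limf_einf (fun t : R => ((distK K (x + t *: y) - distK K x) / t)%:E) (0%R)^'+.

Definition gateaux_differentiable {R : realType} {X : normedModType R}
    (f : X -> R) (x : X) : Prop :=
  exists A : X -> R,
    (forall (a : R) (u v : X), A (a *: u + v) = a * A u + A v) /\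
    continuous A /\
    forall y : X, (fun t : R => (f (x + t *: y) - f x) / t) @ (0%R)^' --> A y.

(* Main.v *)
Require Import Defs.
From HB Require Import structures.
From mathcomp Require Import all_boot all_order all_algebra.
From mathcomp Require Import all_classical all_reals all_analysis.
From mathcomp Require Import ring lra.
Import Order.TTheory GRing.Theory Num.Theory.
Import numFieldNormedType.Exports.
Local Open Scope classical_set_scope.
Local Open Scope ring_scope.
Set Implicit Arguments.

Lemma distK_le (R : realType) (X : normedModType R) (K : set X) z v :
  K v -> distK K z <= `|z - v|.
Proof.
move=> Kv; rewrite /distK; apply: ge_inf; last by exists v.
by exists 0 => _ [w _ <-]; exact: normr_ge0.
Qed.

Lemma distK_lip (R : realType) (X : normedModType R) (K : set X) a b :
  K !=set0 -> distK K a <= distK K b + `|a - b|.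
Proof.
move=> [v Kv]; rewrite -lerBlDr; apply: lb_le_inf; first by exists `|b - v|, v.
move=> _ [w Kw <-]; rewrite lerBlDr.
have h1 := @distK_le _ _ K a w Kw.
have h2 : `|a - w| <= `|a - b| + `|b - w|.
  have -> : a - w = (a - b) + (b - w) by rewrite addrA subrK.
  by apply: ler_normD.
apply: (le_trans h1); apply: (le_trans h2); by rewrite [`|a - b| + _]addrC.
Qed.

Lemma liminf_low (R : realType) (X : normedModType R) (K : set X) x y c :
  distK_lower_dir K x y = c%:E -> forall eta, 0 < eta ->
  exists2 r, 0 < r & forall s, 0 < s -> s < r ->
     c - eta < (distK K (x + s *: y) - distK K x) / s.
Proof.
move=> H eta eta0.
have : ((c - eta)%:E < distK_lower_dir K x y)%E by rewrite H lte_fin gtrDl oppr_lt0.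
rewrite /distK_lower_dir limf_einfE => /ereal_sup_gt [_ [V FV <-]] hV.
move: FV; rewrite /at_right /within /= => /nbhs_ballP [r r0 hr].
exists r => // s s0 sr.
have : (ereal_inf [set ((distK K (x + t *: y) - distK K x) / t)%:E | t in V]
      <= ((distK K (x + s *: y) - distK K x) / s)%:E)%E.
  apply: ereal_inf_lbound; exists s => //; apply: hr => //.
  by rewrite /ball /= sub0r normrN gtr0_norm.
move=> h; have := lt_le_trans hV h; by rewrite lte_fin.
Qed.

Lemma near0P (R : realType) (P : R -> Prop) :
  (\forall t \near (0:R)^', P t) -> exists2 r, 0 < r & forall t, t != 0 -> `|t| < r -> P t.
Proof.
rewrite /within /= => /nbhs_ballP [r r0 hr]; exists r => // t t0 tr.
by apply: hr => //; rewrite /ball /= sub0r normrN.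
Qed.

Unset Implicit Arguments.

Theorem corollary2 (R : realType) (X : completeNormedModType R)
  (K : set X) (x xbar : X) :
  closed K -> K !=set0 -> ~ K x ->
  K xbar -> `|x - xbar| = distK K x ->
  gateaux_differentiable (fun v : X => `|v|) (x - xbar) ->
  distK_lower_dir K x (x - xbar) = (distK K x)%:E ->
  gateaux_differentiable (distK K) x.
Proof.
move=> _ K0 _ Kxb hd [A [Alin [Acont HA]]] hlim.
exists A; split; first exact: Alin; split; first exact: Acont.
move=> y.
set d := distK K x in hd hlim *; set u := x - xbar in hd hlim HA *.
have A0 : A 0 = 0.
  have := Alin 1 0 0; rewrite scaler0 add0r mul1r => /eqP.
  by rewrite -subr_eq0 => /eqP; rewrite opprD addrA subrr sub0r => /eqP; rewrite oppr_eq0 => /eqP.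
have AN : A (- y) = - A y.
  by have := Alin (-1) y 0; rewrite addr0 A0 addr0 scaleN1r mulN1r.
apply/cvgrPdist_le => e e0.
have e30 : 0 < e / 3 by rewrite divr_gt0.
have [r1 r10 h1] := near0P ((cvgrPdist_le _ _).1 (HA (- y)) _ e30).
set eps := r1 / 2.
have eps0 : 0 < eps by rewrite divr_gt0.
have key : forall dl, `|dl| = eps ->
    Num.norm (`|u - dl *: y| - d + dl * A y) <= e / 3 * eps.
  move=> dl hdl.
  have dl0 : dl != 0 by rewrite -normr_eq0 hdl gt_eqF.
  have := h1 dl dl0; rewrite hdl /eps ltr_pdivrMr // ltr_pMr // ltr1n.
  move=> /(_ isT) h; rewrite AN hd in h.
  have -> : `|u - dl *: y| - d + dl * A y =
      dl * - (- A y - (`|u + dl *: - y| - d) / dl).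
    rewrite scalerN; by field.
  by rewrite normrM normrN hdl mulrC ler_pM2r.
have eta0 : 0 < eps * (e / 3) by rewrite mulr_gt0.
have [r2 r20 h2] := @liminf_low _ _ _ _ _ _ hlim _ eta0.
have [r3 r30 h3] := near0P ((cvgrPdist_le _ _).1 (HA y) _ e0).
have r0 : 0 < Num.min r3 (eps * r2) by rewrite lt_min r30 mulr_gt0.
apply/nbhs_ballP; exists (Num.min r3 (eps * r2)) => // t.
rewrite /ball /= sub0r normrN lt_min => /andP [tr3 tr2] t0.
have T0 : 0 < `|t| by rewrite normr_gt0.
set s := `|t| / eps.
have s0 : 0 < s by rewrite divr_gt0.
have sr2 : s < r2 by rewrite /s ltr_pdivrMr // mulrC.
set dl := t / s.
have hdl : `|dl| = eps.
  rewrite /dl /s normrM normrV ?unitfE ?gt_eqF // normrM normrV ?unitfE ?gt_eqF //.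
  rewrite normr_id (gtr0_norm eps0) invf_div mulrCA divff ?mulr1 // gt_eqF //.
have H4 : s * dl = t by rewrite /dl; field; rewrite gt_eqF.
have H5 : s * eps = `|t| by rewrite /s; field; rewrite gt_eqF.
have up : distK K (x + t *: y) <= `|u + t *: y|.
  by have := @distK_le _ _ K (x + t *: y) _ Kxb; rewrite addrAC.
have up2 := h3 t t0 tr3; rewrite hd in up2.
have H1 := h2 s s0 sr2.
have H2 := @distK_lip _ _ K (x + s *: u) (x + t *: y) K0.
have Hn : `|x + s *: u - (x + t *: y)| = s * `|u - dl *: y|.
  rewrite -[X in X * _](gtr0_norm s0) -normrZ; congr (Num.norm _).
  by rewrite [RHS]scalerBr scalerA H4 opprD addrACA subrr add0r.
rewrite Hn in H2.
have H3 := key dl hdl; rewrite ler_norml in H3; case/andP: H3 => _ H3.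
have H3' : s * `|u - dl *: y| - s * d + t * A y <= e / 3 * `|t|.
  rewrite -H5 -H4; have := ler_wpM2l (ltW s0) H3; lra.
have H1' : s * (d - eps * (e / 3)) < distK K (x + s *: u) - d.
  by move: H1; rewrite ltr_pdivlMr // mulrC.
have lo : t * A y - (distK K (x + t *: y) - d) <= e * `|t|.
  have : s * (eps * (e / 3)) = e / 3 * `|t| by rewrite -H5; ring.
  move=> Hse; rewrite mulrBr Hse in H1'.
  have : 0 <= e * `|t| by rewrite mulr_ge0 // ltW.
  lra.
have hi : distK K (x + t *: y) - d - t * A y <= e * `|t|.
  have : `|(A y - (`|u + t *: y| - d) / t) * t| <= e * `|t|.
    by rewrite normrM ler_pM2r.
  have -> : (A y - (`|u + t *: y| - d) / t) * t = t * A y - (`|u + t *: y| - d).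
    by field.
  rewrite ler_norml => /andP [hh _]; lra.
have -> : A y - (distK K (x + t *: y) - d) / t = (t * A y - (distK K (x + t *: y) - d)) / t.
  by field.
rewrite normrM normrV ?unitfE // ler_pdivrMr // ler_norml; apply/andP; split; lra.
Qed.
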